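(* Let $X$ be a set, $T:X\to X$ a map, and $G$ a finite group acting on $X$ such that $g\circ T=T\circ g$ for all $g\in G$. Let $x\in X$ be a periodic point of $T$. Then the number of orbits that glue to $\mathfrak{O}_T(x)$ (including $\mathfrak{O}_T(x)$ itself) equals \[ \frac{|\mathfrak{O}_G(x)|}{|\mathfrak{O}_T(x)\cap\mathfrak{O}_G(x)|}. \]
   Context: For $x\in X$, $\mathfrak{O}_T(x)=\{T^j(x): j\geqslant 0\}$ is the (closed, i.e. finite) orbit of $x$ under $T$, and $\mathfrak{O}_G(x)=\{g(x):g\in G\}$ is the orbit of $x$ under $G$. Let $X'=G\backslash X$, $\pi:X\to X'$ the quotient map $\pi(x)=\mathfrak{O}_G(x)$, and $T':X'\to X'$ the induced map $T'(\mathfrak{O}_G(x))=\mathfrak{O}_G(T(x))$. The ''orbits that glue to $\mathfrak{O}_T(x)$'' are the distinct closed $T$-orbits $\mathfrak{O}_T(y)$, $y\in X$, which are mapped by $\pi$ onto the same $T'$-orbit as $\mathfrak{O}_T(x)$, i.e. with $\pi(\mathfrak{O}_T(y))=\pi(\mathfrak{O}_T(x))$. *)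

(* Defs.v *)
From HB Require Import structures.
From mathcomp Require Import all_boot all_order all_algebra all_fingroup.
From mathcomp Require Import boolp classical_sets functions cardinality.
Set Implicit Arguments. Unset Strict Implicit. Unset Printing Implicit Defensive.

Local Open Scope classical_set_scope.

Definition Torb (X : Type) (T : X -> X) (x : X) : set X :=
  [set iter j T x | j in [set: nat]].

Definition Gorb (gT : finGroupType) (X : Type) (act : gT -> X -> X) (x : X)
  : set X := [set act g x | g in [set: gT]].

Definition is_left_action (gT : finGroupType) (X : Type) (act : gT -> X -> X) :=
  (forall x, act 1%g x = x) /\ (forall g h x, act (g * h)%g x = act g (act h x)).

Definition periodic_pt (X : Type) (T : X -> X) (x : X) :=
  exists n, (0 < n)%N /\ iter n T x = x.

(* pi(A) for A a subset of X: the set of G-orbits of points of A (subset of X') *)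
Definition piS (gT : finGroupType) (X : Type) (act : gT -> X -> X) (A : set X)
  : set (set X) := [set Gorb act z | z in A].

Definition glued (gT : finGroupType) (X : Type) (act : gT -> X -> X)
  (T : X -> X) (x : X) : set (set X) :=
  [set S | exists y, S = Torb T y /\ piS act (Torb T y) = piS act (Torb T x)].

(* Main.v *)
Require Import Defs.
From HB Require Import structures.
From mathcomp Require Import all_boot all_order all_algebra all_fingroup.
From mathcomp Require Import boolp classical_sets functions cardinality.
From mathcomp Require Import ring.
Local Open Scope card_scope.
Lemma countL (I : finType) (Y : Type) (D : set I) (f : I -> Y) (k n : nat) :
  (forall j, D j -> #|[set i | `[< D i /\ f i = f j >]]| = k) ->
  (classical_sets.image D f) #= (`I_n)%classic -> #|[set i | `[< D i >]]| = (n * k)%N.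
Proof.
move=> Hk /card_set_bijP [phi [Hfun Hinj Hsurj]].
pose c i := phi (f i).
have cn : forall i, D i -> (c i < n)%N.
  by move=> i Di; have := Hfun (f i) (ex_intro2 _ _ i Di erefl).
rewrite -sum1_card.
transitivity (\sum_(i in [set i | `[< D i >]]) \sum_(m < n) (c i == m : nat)).
  apply: eq_bigr => i; rewrite inE => /asboolP Di.
  rewrite (bigD1 (Ordinal (cn i Di))) //= eqxx big1 // => m /negP Hm.
  case: eqP => // E; exfalso; apply: Hm; apply/eqP/val_inj => /=; by rewrite E.
rewrite exchange_big /=.
transitivity (\sum_(m < n) k); last by rewrite sum_nat_const card_ord.
apply: eq_bigr => m _.
have [y [j Dj <-] Hm] : exists2 y, (classical_sets.image D f) y & phi y = m.
  have := Hsurj m (ltn_ord m); case => y Hy <-; by exists y.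
rewrite -(Hk j Dj) -sum1_card big_mkcond /= [RHS]big_mkcond /=.
apply: eq_bigr => i _; rewrite !inE.
case: (asboolP (D i)) => Di /=.
- case: asboolP => [[_ E]|NE] /=.
  + by rewrite /c E Hm eqxx.
  + case: eqP => // E; exfalso; apply: NE; split => //.
    apply: Hinj; [apply/mem_set; by exists i|apply/mem_set; by exists j|]. by rewrite -/(c i) E Hm.
- by case: asboolP => // -[].
Qed.

Lemma fiber_transl (gT : finGroupType) (P Q : gT -> Prop) (j : gT) :
  (forall i, P i <-> Q (j^-1 * i)%g) ->
  #|[set i | `[< P i >]]| = #|[set i | `[< Q i >]]|.
Proof.
move=> H; rewrite -[RHS](card_imset _ (mulgI j)); apply: eq_card => i.
rewrite inE; apply/asboolP/imsetP.
- move=> /H Hq; exists (j^-1 * i)%g; first by rewrite inE; apply/asboolP.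
  by rewrite mulKVg.
- case=> h; rewrite inE => /asboolP Qh ->; apply/H; by rewrite mulKg.
Qed.

Local Open Scope classical_set_scope.

Lemma act_iter (gT : finGroupType) X (act : gT -> X -> X) T
  (Hcomm : forall g z, act g (T z) = T (act g z)) g n z :
  act g (iter n T z) = iter n T (act g z).
Proof. by elim: n => //= n IH; rewrite Hcomm IH. Qed.

Lemma iter_per X (T : X -> X) z p : iter p T z = z -> forall a, iter (p * a) T z = z.
Proof.
move=> Hp; elim=> [|a IH]; first by rewrite muln0.
by rewrite mulnS iterD IH Hp.
Qed.

Lemma Torb_same X (T : X -> X) z w : periodic_pt T z -> Torb T z w -> Torb T w = Torb T z.
Proof.
move=> [p [p0 Hp]] [a _ <-]; apply/seteqP; split => y [b _ <-].
- by exists (b + a)%N => //; rewrite iterD.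
- exists (b + p * a - a)%N => //; rewrite -iterD subnK; last first.
    by rewrite (leq_trans (leq_pmull a p0)) // ?leq_addl // mulnC.
  by rewrite iterD iter_per.
Qed.

Lemma act_inv (gT : finGroupType) X (act : gT -> X -> X) (Hact : is_left_action act)
  g y : act g^-1%g (act g y) = y.
Proof. by case: Hact => H1 HM; rewrite -HM mulVg H1. Qed.

Lemma act_invr (gT : finGroupType) X (act : gT -> X -> X) (Hact : is_left_action act)
  g y : act g (act g^-1%g y) = y.
Proof. by case: Hact => H1 HM; rewrite -HM mulgV H1. Qed.
Local Open Scope card_scope.

Arguments act_inv {gT X act}.
Arguments act_invr {gT X act}.

Theorem lemma5 (gT : finGroupType) (X : Type) (act : gT -> X -> X)
  (T : X -> X) (x : X)
  (Hact : is_left_action act)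
  (Hcomm : forall g z, act g (T z) = T (act g z))
  (Hper : periodic_pt T x)
  (nGlue nG nI : nat)
  (HnGlue : glued act T x #= `I_nGlue)
  (HnG : Gorb act x #= `I_nG)
  (HnI : (classical_sets.setI (Torb T x) (Gorb act x)) #= `I_nI) :
  (nGlue%:Q = nG%:Q / nI%:Q)%R.
Proof.
have [H1 HM] := Hact.
pose e g := act g x.
pose H := fun g => Torb T x (e g).
have perg : forall g, periodic_pt T (e g).
  case: Hper => p [p0 Hp] g; exists p; split => //.
  by rewrite /e -act_iter // Hp.
have TorbA : forall g z, Torb T (act g z) = act g @` Torb T z.
  move=> g z; apply/seteqP; split => w.
  - move=> [a _ <-].
    by exists (iter a T z) => //; [exists a | rewrite act_iter].
  - by move=> [a [b _ <-] <-]; exists b => //; rewrite act_iter.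
have GorbA : forall g z, Gorb act (act g z) = Gorb act z.
  move=> g z; apply/seteqP; split => w [h _ <-].
  - by exists (h * g)%g => //; rewrite HM.
  - by exists (h * g^-1)%g => //; rewrite HM (act_inv Hact).
have key : forall i j, Torb T (e i) = Torb T (e j) <-> H (j^-1 * i)%g.
  move=> i j; split.
  - move=> E; have : Torb T (e i) (e i) by exists 0%N.
    rewrite E /e TorbA => -[w Cw Ew].
    by rewrite /H /e HM -Ew (act_inv Hact).
  - move=> Hji; apply: Torb_same; first exact: perg.
    rewrite /e TorbA; exists (e (j^-1 * i)%g) => //.
    by rewrite /e HM (act_invr Hact).
have gluedE : glued act T x = classical_sets.image setT (fun g => Torb T (e g)).
  apply/seteqP; split => S.
  - move=> [y [-> Hy]].
    have : piS act (Torb T x) (Gorb act y) by rewrite -Hy; exists y => //; exists 0%N.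
    case=> _ [a _ <-] Ea.
    have : Gorb act (iter a T x) (iter a T x) by exists 1%g => //; rewrite H1.
    rewrite Ea => -[h _ Eh].
    exists (h^-1)%g => //.
    have -> : y = iter a T (e h^-1%g) by rewrite /e -act_iter // -Eh (act_inv Hact).
symmetry; apply: Torb_same; first exact: perg.
    by exists a.
  - move=> [g _ <-]; exists (e g); split => //.
    rewrite /e TorbA; apply/seteqP; split => O [z Cz <-].
    + case: Cz => w Cw <-; exists w => //; exact: GorbA.
    + exists (act g z); first by exists z.
      exact: GorbA.
have HIE : classical_sets.setI (Torb T x) (Gorb act x) = classical_sets.image H e.
  apply/seteqP; split => w.
  - by move=> [Cw [g _ Eg]]; exists g => //; rewrite /H -Eg in Cw *.
  - by move=> [g Hg <-]; split => //; exists g.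
rewrite gluedE in HnGlue; rewrite HIE in HnI.
pose k0 := #|[set i | `[< act i x = x >]]%SET|.
have cG := @countL gT X setT e k0 nG _ HnG.
have cI := @countL gT X H e k0 nI _ HnI.
have cGl := @countL gT (set X) setT (fun g => Torb T (e g))
   #|[set i | `[< H i >]]%SET| nGlue _ HnGlue.
have fibe : forall j, #|[set i | `[< setT i /\ e i = e j >]]%SET| = k0.
  move=> j; apply: (@fiber_transl _ _ _ j) => i; split.
  - by move=> [_ E]; rewrite HM -/(e i) E /e (act_inv Hact).
  - move=> E; split => //.
    by rewrite /e -{1}(mulKVg j i) HM E.
have {}cG := cG (fun j _ => fibe j).
have {}cI : #|[set i | `[< H i >]]%SET| = (nI * k0)%N.
  apply: cI => j Hj; rewrite -(fibe j); apply: eq_card => i; rewrite !inE.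
  apply/asboolP/asboolP => -[Hi E]; split => //; by rewrite /H E.
have {}cGl : #|[set i | `[< [set: gT]%classic i >]]%SET| = (nGlue * #|[set i | `[< H i >]]%SET|)%N.
  apply: cGl => j _; apply: (@fiber_transl _ _ _ j) => i; split.
  - by move=> [_ /key].
  - by move=> /key.
have k0pos : (0 < k0)%N.
  by apply/card_gt0P; exists 1%g; rewrite inE; apply/asboolP; rewrite H1.
have nIpos : (0 < nI)%N.
  have : (0 < #|[set i | `[< H i >]]%SET|)%N.
    apply/card_gt0P; exists 1%g; rewrite inE; apply/asboolP.
    by exists 0%N => //=; rewrite /e H1.
  by rewrite cI muln_gt0 => /andP[].
have EnG : nG = (nGlue * nI)%N.
  apply/eqP; rewrite -(eqn_pmul2r k0pos) -cG cGl cI mulnA //.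
rewrite EnG PoszM intrM GRing.mulfK // intr_eq0 eqz_nat -lt0n nIpos //.
Qed.
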